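(* Let $\overline{C}_n$ denote the graph complement of the cycle graph $C_n$. Then $\tau(\overline{C}_n)\to e$ as $n\to\infty$, where $e$ is Euler's number.
   Context: For a finite simple graph $G$, $K=D-A$ is its Kirchhoff matrix (degree matrix minus adjacency matrix), ${\rm Det}(K)$ its pseudo-determinant (product of non-zero eigenvalues with multiplicity), and $\tau(G)={\rm det}(1+K)/{\rm Det}(K)=\prod_{\lambda\neq0}(1+1/\lambda)$, the product running over the non-zero eigenvalues of $K$. *)

(* Defs.v *)
From HB Require Import structures.
From mathcomp Require Import all_boot all_order all_algebra.
From mathcomp Require Import all_classical all_reals all_analysis.
Set Implicit Arguments. Unset Strict Implicit. Unset Printing Implicit Defensive.
Import Order.TTheory GRing.Theory Num.Theory.
Local Open Scope ring_scope.

(* The cycle graph C_n on vertices 'I_n: i ~ j iff j = i+1 or i = j+1 (mod n),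
   and i <> j (simple graph).  For n >= 3 this is the usual cycle. *)
Definition cycle_adj (n : nat) : rel 'I_n :=
  fun i j => (i != j) && (((i.+1 %% n)%N == j) || ((j.+1 %% n)%N == i)).

Definition cocycle_adj (n : nat) : rel 'I_n :=
  fun i j => (i != j) && ~~ cycle_adj i j.

Definition kirchhoff (R : nzRingType) (n : nat) (e : rel 'I_n) : 'M[R]_n :=
  \matrix_(i, j) ((if i == j then (#|[pred k | e i k]|)%:R else 0)
                  - (if e i j then 1 else 0)).

(* The eigenvalues of a real square matrix, listed with (algebraic) multiplicity:
   a sequence s with char_poly A = \prod_(x <- s) ('X - x).  Such an s is unique
   up to permutation when it exists (always the case for real symmetric matrices
   such as Kirchhoff matrices); the fallback [::] is never used for them. *)
Definition spectrum (R : realType) (n : nat) (A : 'M[R]_n) : seq R :=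
  match pselect (exists s : seq R, char_poly A = \prod_(x <- s) ('X - x%:P)) with
  | left H => projT1 (cid H)
  | right _ => [::]
  end.

Definition pdet (R : realType) (n : nat) (A : 'M[R]_n) : R :=
  \prod_(l <- spectrum A | l != 0) l.

Definition tau (R : realType) (n : nat) (e : rel 'I_n) : R :=
  \det (1%:M + kirchhoff R e) / pdet (kirchhoff R e).

(* Main.v *)
Require Import Defs.
From HB Require Import structures.
From mathcomp Require Import all_boot all_order all_algebra.
From mathcomp Require Import all_classical all_reals all_analysis.
From mathcomp.real_closed Require Import complex.
From mathcomp Require Import ring lra zify.
Import Order.TTheory GRing.Theory Num.Theory.
Import numFieldNormedType.Exports.
Local Open Scope classical_set_scope.
Local Open Scope ring_scope.

Lemma char_poly_similar (F : fieldType) n (P D : 'M[F]_n) : P \in unitmx ->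
  char_poly (invmx P *m D *m P) = char_poly D.
Proof.
move=> Pu; rewrite /char_poly /char_poly_mx.
have -> : ('X%:M - map_mx polyC (invmx P *m D *m P)) =
   map_mx polyC (invmx P) *m ('X%:M - map_mx polyC D) *m map_mx polyC P.
  rewrite mulmxBr mulmxBl !map_mxM -!mulmxA mul_scalar_mx -scalemxAr -mul_mx_scalar.
  have h : map_mx polyC (invmx P) *m map_mx polyC P = 1%:M.
    by rewrite -map_mxM mulVmx // map_mx1.
  by rewrite !mulmxA h mul1mx.
rewrite !det_mulmx !det_map_mx mulrC mulrA -rmorphM/= -det_mulmx mulmxV //.
by rewrite det1 rmorph1 mul1r.
Qed.

Section Split.
Variable R : realType.
Local Open Scope complex_scope.

Lemma real_split n (A : 'M[R]_n) : A^T = A ->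
  exists s : seq R, char_poly A = \prod_(x <- s) ('X - x%:P).
Proof.
move=> Asym.
pose f := (real_complex R).
pose AC := map_mx f A.
have ACh : AC \is hermsymmx.
  apply: realsym_hermsym.
    by apply/is_hermitianmxP; rewrite expr0 scale1r map_mx_id // /AC map_trmx Asym.
  by apply/mxOverP => i j; rewrite mxE /= realE ler0c lecR -realE num_real.
have /orthomx_spectralP Ae := hermitian_normalmx ACh.
have dreal := hermitian_spectral_diag_real ACh.
set P := spectralmx AC in Ae; set d := spectral_diag AC in Ae dreal.
exists [seq complex.Re (d 0 i) | i <- enum 'I_n].
apply: (@map_poly_inj _ _ f).
rewrite map_char_poly -/AC Ae char_poly_similar ?spectral_unit //.
rewrite char_poly_trig ?diag_mx_is_trig // rmorph_prod big_map big_enum /=.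
apply: eq_bigr => i _; rewrite map_polyXsubC /= !mxE eqxx mulr1n.
have := mxOverP dreal 0 i; move: (d 0 i) => [a b].
rewrite realE !lecE /= => /orP[] /andP[/eqP h _]; [rewrite h | rewrite -h] => //.
Qed.
End Split.

Set Implicit Arguments. Unset Strict Implicit. Unset Printing Implicit Defensive.

Section Gen.
Variable R : realType.

Lemma horner_char_poly n (A : 'M[R]_n) a : (char_poly A).[a] = \det (a%:M - A).
Proof.
rewrite /char_poly -horner_evalE -det_map_mx; congr (\det _).
by apply/matrixP => i j; rewrite !mxE /= horner_evalE !hornerE hornerMn hornerX.
Qed.

Lemma spec_size n (A : 'M[R]_n) (s : seq R) :
  char_poly A = \prod_(x <- s) ('X - x%:P) -> size s = n.
Proof.
move=> h; have := size_char_poly A; rewrite h size_prod_XsubC.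
by case.
Qed.

Lemma prod_m1 (s : seq R) : \prod_(x <- s) (-1 - x) = (-1) ^+ size s * \prod_(x <- s) (1 + x).
Proof.
elim: s => [|y s IH]; first by rewrite !big_nil mulr1.
by rewrite !big_cons IH /= exprS; ring.
Qed.

Lemma spec_det1 n (A : 'M[R]_n) (s : seq R) :
  char_poly A = \prod_(x <- s) ('X - x%:P) -> \det (1%:M + A) = \prod_(x <- s) (1 + x).
Proof.
move=> h; have := horner_char_poly A (-1).
rewrite h horner_prod.
have -> : (-1)%:M - A = (-1) *: (1%:M + A).
  by rewrite scalerDr scale_scalar_mx mulr1 scaleN1r.
rewrite detZ.
under eq_bigr => x _ do rewrite hornerXsubC.
rewrite prod_m1 (spec_size h) => H.
have u : ((-1) ^+ n : R) \is a GRing.unit by rewrite unitrX // unitrN unitr1.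
exact: (esym (mulrI u H)).
Qed.

Lemma spec_trace n (A : 'M[R]_n) (s : seq R) : (0 < n)%N ->
  char_poly A = \prod_(x <- s) ('X - x%:P) -> \tr A = \sum_(x <- s) x.
Proof.
move=> n0 h; have := char_poly_trace A n0.
have e : n.-1 = (size s).-1 by rewrite (spec_size h).
rewrite h e coefPn_prod_XsubC; last by rewrite (spec_size h) -lt0n.
move=> /eqP.
by rewrite eqr_opp => /eqP.
Qed.

Lemma spec_eig n (A : 'M[R]_n) (s : seq R) x :
  char_poly A = \prod_(x <- s) ('X - x%:P) -> x \in s -> eigenvalue A x.
Proof. by move=> h xs; rewrite eigenvalue_root_char h root_prod_XsubC. Qed.

Lemma spectrumP n (A : 'M[R]_n) : A^T = A ->
  char_poly A = \prod_(x <- spectrum A) ('X - x%:P).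
Proof.
move=> /real_split ex; rewrite /spectrum; case: pselect => // H.
by case: (cid H).
Qed.
End Gen.


Lemma cycle_adj_sym n (i j : 'I_n) : cycle_adj i j = cycle_adj j i.
Proof. by rewrite /cycle_adj eq_sym orbC. Qed.

Lemma cocycle_sym n (i j : 'I_n) : cocycle_adj i j = cocycle_adj j i.
Proof. by rewrite /cocycle_adj eq_sym cycle_adj_sym. Qed.

Lemma nbrs n (i k : 'I_n) : cycle_adj i k ->
  (val k = i.+1 %% n)%N \/ (val k = (i + n.-1) %% n)%N.
Proof.
rewrite /cycle_adj => /andP[_ /orP[/eqP h|/eqP h]]; [left; by rewrite h|right].
move: h; case: i k => [a an] [b bn] /= h.
case: (ltngtP b.+1 n) => [lt|gt|bE]; last first.
  move: h; rewrite bE modnn => <-; rewrite add0n modn_small -bE //.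
  by move: gt; rewrite ltnNge bn.
  move: h; rewrite modn_small // => <-.
  by rewrite addSnnS prednK ?(leq_ltn_trans _ bn) // modnDr modn_small.
Qed.

Lemma card_le_seq n (P : pred 'I_n) (l : seq nat) :
  (forall k, P k -> val k \in l) -> (#|P| <= size l)%N.
Proof.
move=> H; rewrite cardE -(size_map val); apply: uniq_leq_size.
  by rewrite map_inj_uniq ?enum_uniq //; exact: val_inj.
by move=> x /mapP [k]; rewrite mem_enum => Pk ->; exact: H.
Qed.

Lemma cyc_card n (i : 'I_n) : (#|[pred k | cycle_adj i k]| <= 2)%N.
Proof.
apply: (@card_le_seq _ _ [:: (i.+1 %% n)%N; ((i + n.-1) %% n)%N]) => k /= H.
by case: (nbrs H) => ->; rewrite !inE eqxx ?orbT.
Qed.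

Lemma deg_lb n (i : 'I_n) : (n <= #|[pred k | cocycle_adj i k]| + 3)%N.
Proof.
have := cardC [pred k | cocycle_adj i k]; rewrite card_ord => {1}<-.
rewrite leq_add2l.
apply: (@card_le_seq _ _ [:: val i; (i.+1 %% n)%N; ((i + n.-1) %% n)%N]) => k.
rewrite !inE /cocycle_adj negb_and negbK => /orP[/eqP->|]; last rewrite negbK => H.
  by rewrite eqxx.
by case: (nbrs H) => ->; rewrite eqxx ?orbT.
Qed.

Section K.
Variable R : realType.

Lemma kirchhoff_row0 n (e : rel 'I_n) i : \sum_j kirchhoff R e i j = 0.
Proof.
under eq_bigr => j _ do rewrite mxE.
rewrite sumrB -big_mkcond /= (eq_bigl (fun j => j == i)); last by move=> j; rewrite eq_sym.
rewrite big_pred1_eq -big_mkcond /= sumr_const.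
by apply/eqP; rewrite subr_eq0; apply/eqP; congr (_%:R); apply: eq_card => k.
Qed.

Lemma K_sym n : (kirchhoff R (@cocycle_adj n))^T = kirchhoff R (@cocycle_adj n).
Proof.
apply/matrixP => i j; rewrite !mxE cocycle_sym eq_sym.
by case: eqP => [->|].
Qed.
End K.


Section K2.
Variable R : realType.

Lemma deg_bounds n (i : 'I_n) :
  n%:R <= (#|[pred k | cocycle_adj i k]|)%:R + 3 :> R /\
  (#|[pred k | cocycle_adj i k]|)%:R <= n%:R :> R.
Proof.
split.
  have := deg_lb i; rewrite -(ler_nat R) natrD => h; exact: h.
have := max_card [pred k | cocycle_adj i k]; rewrite card_ord -(ler_nat R) => h.
exact: h.
Qed.

Lemma trace_lb n : n%:R * (n%:R - 3) <= \tr (kirchhoff R (@cocycle_adj n)).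
Proof.
rewrite /mxtrace.
have -> : n%:R * (n%:R - 3) = \sum_(i < n) (n%:R - 3 : R).
  by rewrite sumr_const card_ord mulr_natl.
apply: ler_sum => i _; rewrite mxE eqxx /cocycle_adj eqxx /= subr0.
have [h _] := deg_bounds i; lra.
Qed.

Lemma eig_bound n (x : R) : eigenvalue (kirchhoff R (@cocycle_adj n)) x -> x != 0 ->
  n%:R - 4 <= x <= n%:R + 3.
Proof.
set K := kirchhoff R (@cocycle_adj n).
move=> /eigenvalueP [v vK v0] x0.
have S0 : \sum_i v 0 i = 0.
  have h1 : \sum_j (v *m K) 0 j = x * \sum_j v 0 j.
    by rewrite vK mulr_sumr; apply: eq_bigr => j _; rewrite mxE.
  have h2 : \sum_j (v *m K) 0 j = 0.
    under eq_bigr do rewrite mxE.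
    rewrite exchange_big /=; apply: big1 => i _.
    by rewrite -mulr_sumr kirchhoff_row0 mulr0.
  by move: h1; rewrite h2 => /esym/eqP; rewrite mulf_eq0 (negPf x0) => /eqP.
have /existsP [k vk] : [exists k, v 0 k != 0].
  apply: contraR v0 => /existsPn H; apply/eqP/rowP => k; rewrite mxE.
  by apply/eqP; move: (H k); rewrite negbK.
pose j := [arg max_(i > k) (`|v 0 i| : R)]%O.
have Hj : forall i, `|v 0 i| <= `|v 0 j|.
  by rewrite /j; case: arg_maxP => // j0 _ H i; apply: H.
have vj0 : 0 < `|v 0 j| by apply: lt_le_trans (Hj k); rewrite normr_gt0.
pose d := (#|[pred k | cocycle_adj j k]|)%:R : R.
pose N := \sum_(i | cycle_adj i j) v 0 i.
have E : (v *m K) 0 j = d * v 0 j - \sum_i v 0 i + v 0 j + N.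
  rewrite mxE.
  transitivity (\sum_i ((if i == j then d * v 0 i else 0) - v 0 i +
     (if i == j then v 0 i else 0) + (if cycle_adj i j then v 0 i else 0))).
    apply: eq_bigr => i _; rewrite mxE /cocycle_adj.
    case: (eqVneq i j) => [->|ne].
      by rewrite /cycle_adj eqxx /= /d; ring.
    case: (cycle_adj i j) => /=; ring.
  rewrite !big_split /= sumrN -!big_mkcond /= !big_pred1_eq.
  done.
have NE : (x - d - 1) * v 0 j = N.
  have : x * v 0 j = d * v 0 j - 0 + v 0 j + N by rewrite -S0 -E vK mxE.
  by rewrite !mulrBl mul1r => ->; ring.
have NB : `|N| <= 2 * `|v 0 j|.
  apply: le_trans (ler_norm_sum _ _ _) _.
  apply: le_trans (ler_sum _ (fun i _ => Hj i)) _.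
  rewrite sumr_const.
  have c2 := cyc_card j.
  have -> : #|(fun i => cycle_adj i j)| = #|[pred k | cycle_adj j k]|.
    by apply: eq_card => i; rewrite !inE cycle_adj_sym.
  rewrite -(mulr_natr `|v 0 j|) mulrC ler_pM2r //.
  by rewrite (ler_nat R _ 2).
have B2 : `|x - d - 1| <= 2.
  by rewrite -(ler_pM2r vj0) -normrM NE.
have [h1 h2] := deg_bounds j.
move: B2; rewrite ler_norml -/d => /andP[b1 b2].
apply/andP; split; lra.
Qed.
End K2.


Section E.
Variable R : realType.

Lemma lb_elem (x : R) : 0 < x -> expR ((x + 1)^-1) <= (1 + x) / x.
Proof.
move=> x0; set a := (x + 1)^-1.
have ha : a * (x + 1) = 1 by rewrite /a mulVf //; lra.
have h := expR_ge1Dx (- a).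
have EF : expR a * expR (- a) = 1 := expRxMexpNx_1 a.
have E0 := expR_gt0 a.
rewrite ler_pdivlMr //.
have P : 0 <= expR a * (x + 1) by apply: mulr_ge0; lra.
have := ler_wpM2l P h.
have -> : expR a * (x + 1) * expR (- a) = x + 1.
  by rewrite mulrAC EF mul1r.
have -> : expR a * (x + 1) * (1 + - a) = expR a * x.
  by rewrite -mulrA mulrDr mulr1 mulrN (mulrC (x+1) a) ha addrK.
by rewrite addrC.
Qed.

Lemma ub_elem (x c : R) : 0 < c -> c <= x -> (1 + x) / x <= expR (c^-1).
Proof.
move=> c0 cx.
have x0 : 0 < x by lra.
have -> : (1 + x) / x = 1 + x^-1 by rewrite mulrDl mul1r mulfV ?gt_eqF // addrC.
apply: le_trans (expR_ge1Dx _) _.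
rewrite ler_expR.
by rewrite lef_pV2 ?posrE.
Qed.
End E.

Section G.
Variable R : realType.
Lemma fin_lb (N M : R) : 8 <= N -> M <= N -> N * (N - 3) <= (N + 3) * M ->
  1 - 10 * (N + 1)^-1 <= M * (N + 4)^-1.
Proof.
move=> N8 mn mlb.
have -> : 1 - 10 * (N + 1)^-1 = (N - 9) / (N + 1) by field; lra.
have p1 : 0 < N + 1 by lra.
have p4 : 0 < N + 4 by lra.
rewrite ler_pdivlMr // mulrAC ler_pdivrMr //.
nra.
Qed.
Lemma fin_ub (N M : R) : 8 <= N -> M <= N ->
  M * (N - 4)^-1 <= 1 + 10 * (N + 1)^-1.
Proof.
move=> N8 mn.
have -> : 1 + 10 * (N + 1)^-1 = (N + 11) / (N + 1) by field; lra.
have p1 : 0 < N + 1 by lra.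
have p4 : 0 < N - 4 by lra.
rewrite ler_pdivlMr // mulrAC ler_pdivrMr //.
have h : M * (N + 1) <= N * (N + 1) by apply: ler_wpM2r; lra.
nra.
Qed.
End G.


Section F.
Variable R : realType.

Lemma tau_bounds n : (8 <= n)%N ->
  expR (1 - 10 * (n.+1%:R)^-1) <= tau R (@cocycle_adj n) <= expR (1 + 10 * (n.+1%:R)^-1).
Proof.
move=> n8.
set K := kirchhoff R (@cocycle_adj n).
have hs := spectrumP (K_sym R n); rewrite -/K in hs.
set s := spectrum K in hs.
have sz := spec_size hs.
have N8 : 8 <= n%:R :> R by rewrite (ler_nat R 8 n).
have xb : forall x, x \in s -> x != 0 -> n%:R - 4 <= x <= n%:R + 3.
  by move=> x xs x0; apply: eig_bound => //; exact: spec_eig hs xs.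
set m := count (fun x => x != 0) s.
have mn : m%:R <= n%:R :> R by rewrite ler_nat -sz count_size.
have n0 : (0 < n)%N by apply: leq_trans n8.
have tr := spec_trace n0 hs.
have trb := trace_lb R n; rewrite -/K in trb.
have sumE : \sum_(x <- s) x = \sum_(x <- s | x != 0) x.
  by rewrite (bigID (fun x => x != 0)) /= [X in _ + X]big1 ?addr0 // => x /negPn/eqP.
have msum : \sum_(x <- s | x != 0) x <= (n%:R + 3) *+ m.
  rewrite /m -iter_addr_0 -big_const_seq [X in X <= _]big_seq_cond [X in _ <= X]big_seq_cond.
  apply: ler_sum => x /andP[xs x0]; have /andP[_ ?] := xb x xs x0; done.
have mlb : n%:R * (n%:R - 3) <= (n%:R + 3) * (m%:R : R).
  by apply: (le_trans trb); rewrite tr sumE mulr_natr.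
rewrite /tau /pdet -/K -/s.
have -> : \det (1%:M + K) = \prod_(x <- s) (1 + x) by exact: spec_det1 hs.
have pE : \prod_(x <- s) (1 + x) = \prod_(x <- s | x != 0) (1 + x).
  by rewrite (bigID (fun x => x != 0)) /= [X in _ * X]big1 ?mulr1 // => x /negPn/eqP ->; rewrite addr0.
rewrite pE -prodf_div.
have L : expR ((n%:R + 4)^-1) ^+ m <= \prod_(x <- s | x != 0) ((1 + x) / x).
  rewrite /m -iter_mulr_1 -big_const_seq [X in X <= _]big_seq_cond [X in _ <= X]big_seq_cond.
  apply: ler_prod => x /andP[xs x0]; have /andP[l u] := xb x xs x0.
  rewrite expR_ge0 /=.
  apply: le_trans (lb_elem _); last by lra.
  by rewrite ler_expR lef_pV2 ?posrE; lra.
have U : \prod_(x <- s | x != 0) ((1 + x) / x) <= expR ((n%:R - 4)^-1) ^+ m.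
  rewrite /m -iter_mulr_1 -big_const_seq [X in X <= _]big_seq_cond [X in _ <= X]big_seq_cond.
  apply: ler_prod => x /andP[xs x0]; have /andP[l u] := xb x xs x0.
  clear L; apply/andP; split; first by apply: divr_ge0; lra.
  by apply: ub_elem; lra.
rewrite -!expRM_natl in L U.
have e1 : n.+1%:R = n%:R + 1 :> R by rewrite -addn1 natrD.
rewrite e1.
set N := (n%:R : R) in N8 mn mlb L U *.
set M := (m%:R : R) in mn mlb L U *.
apply/andP; split.
  apply: le_trans L; rewrite ler_expR; exact: fin_lb.
apply: le_trans U _; rewrite ler_expR; exact: fin_ub.
Qed.
End F.


Lemma hh (R : realType) : (fun n : nat => 10 * (n.+1%:R : R)^-1) @ \oo --> 0.
Proof.
have := cvgM (cvg_cst (10:R)) (@cvg_harmonic R); rewrite mulr0.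
by move=> h; exact: h.
Qed.

Theorem mainTheorem2 (R : realType) :
  (fun n : nat => tau R (@cocycle_adj n)) @ \oo --> expR (1 : R).
Proof.
apply: (@squeeze_cvgr _ _ _ R (fun n => expR (1 - 10 * (n.+1%:R)^-1))
   (fun n => expR (1 + 10 * (n.+1%:R)^-1))).
- by apply: filterS (nbhs_infty_ge 8) => n; exact: tau_bounds.
- have h : (fun n : nat => 1 - 10 * (n.+1%:R : R)^-1) @ \oo --> (1 : R).
    by have := cvgB (cvg_cst (1:R)) (@hh R); rewrite subr0 => h0; exact: h0.
  have := continuous_cvg _ (@continuous_expR R 1) h. move=> h0; exact: h0.
- have h : (fun n : nat => 1 + 10 * (n.+1%:R : R)^-1) @ \oo --> (1 : R).
    by have := cvgD (cvg_cst (1:R)) (@hh R); rewrite addr0 => h0; exact: h0.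
  have := continuous_cvg _ (@continuous_expR R 1) h. move=> h0; exact: h0.
Qed.
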